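(* Let $G$ be an $\alpha$-separable graph with $m$ edges and let $\mathcal{T}$ be a separator tree of $G$ of height $\eta=O(\log m)$ in which, for every non-leaf node $H$, the children of $H$ and the separator $S(H)$ come from a partition as in the definition of $\alpha$-separability (so $|S(H)|\le c\lceil|E(H)|^{\alpha}\rceil$). Let $\mathcal{H}$ be a set of $K$ nodes of $\mathcal{T}$. Then \[\sum_{H\in\mathcal{P}_{\mathcal{T}}(\mathcal{H})}\big(|\partial H|+|S(H)|\big)\le\widetilde{O}(K^{1-\alpha}m^{\alpha}).\]
   Context: A graph $G=(V,E)$ is $\alpha$-separable if there are constants $c>0$, $b\in(0,1)$ such that every nonempty subgraph $H$ of $G$ with $|E(H)|\ge2$ can be partitioned into $H_1,H_2$ with $E(H_1)\cup E(H_2)=E(H)$, $E(H_1)\cap E(H_2)=\emptyset$, $|V(H_1)\cap V(H_2)|\le c\lceil|E(H)|^{\alpha}\rceil$, and $|E(H_i)|\le b|E(H)|$ for $i=1,2$; $S(H)=V(H_1)\cap V(H_2)$. Separator tree: a rooted binary tree $\mathcal{T}$ whose nodes are regions (edge-induced subgraphs) $H$ of $G$, each storing vertex sets $\partial H$, $S(H)$, $F_H$, defined top-down: the root is $G$ with $\partial G=\emptyset$, $F_G=S(G)$; a non-leaf node $H$ has two children $D_1,D_2$ whose edge sets partition $E(H)$, with $V(D_1)\cap V(D_2)=S(H)$, $\partial D_j=(\partial H\cup S(H))\cap V(D_j)$, and $F_H=S(H)\setminus\partial H$; a node with constantly many edges is a leaf with $S(H)=\emptyset$ and $F_H=V(H)\setminus\partial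 H$. For a set $\mathcal{H}$ of nodes, $\mathcal{P}_{\mathcal{T}}(\mathcal{H})$ is the set of all nodes lying on a tree path from some $H\in\mathcal{H}$ to the root (including $H$ and the root). $\widetilde{O}$ hides polylogarithmic factors in $m$. *)

(* Defs.v *)
From HB Require Import structures.
From mathcomp Require Import all_boot all_order all_algebra.
From mathcomp Require Import reals.
From mathcomp Require Import exp.
Set Implicit Arguments. Unset Strict Implicit. Unset Printing Implicit Defensive.
Import Order.TTheory GRing.Theory Num.Theory.
Local Open Scope ring_scope.

Section Defs.
Variable V : finType.

(* A (finite simple) graph is given by its edge set; an edge is a 2-element
   vertex set.  Regions / edge-induced subgraphs are subsets of edges. *)
Definition simple_graph (G : {set {set V}}) : Prop :=
  forall e, e \in G -> #|e| = 2%N.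

Definition verts (F : {set {set V}}) : {set V} := \bigcup_(e in F) e.

Variable R : realType.

Definition sepbound (alpha c : R) (n : nat) : R :=
  c * (Num.ceil ((n%:R : R) `^ alpha))%:~R.

Definition separable (alpha c b : R) (G : {set {set V}}) : Prop :=
  forall F : {set {set V}}, F \subset G -> (2 <= #|F|)%N ->
    exists F1 F2 : {set {set V}},
      [/\ F1 :&: F2 = set0, F1 :|: F2 = F,
          (#|verts F1 :&: verts F2|%:R <= sepbound alpha c #|F|),
          (#|F1|%:R <= b * #|F|%:R) & (#|F2|%:R <= b * #|F|%:R)].

(* Separator tree: each node stores its region (edge set); non-leaf nodes
   also store the separator S(H).  Boundaries are computed top-down. *)
Inductive stree : Type :=
| SLeaf of {set {set V}}
| SNode of {set {set V}} & {set V} & stree & stree.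

Definition region (t : stree) : {set {set V}} :=
  match t with SLeaf F => F | SNode F _ _ _ => F end.

Definition sepof (t : stree) : {set V} :=
  match t with SLeaf _ => set0 | SNode _ Sp _ _ => Sp end.

Fixpoint height (t : stree) : nat :=
  match t with SLeaf _ => 0%N | SNode _ _ t1 t2 => (maxn (height t1) (height t2)).+1 end.

Fixpoint wf_tree (alpha c b : R) (L : nat) (t : stree) : Prop :=
  match t with
  | SLeaf F => (#|F| <= L)%N
  | SNode F Sp t1 t2 =>
      [/\ (2 <= #|F|)%N,
          region t1 :&: region t2 = set0,
          region t1 :|: region t2 = F,
          verts (region t1) :&: verts (region t2) = Sp &
          #|Sp|%:R <= sepbound alpha c #|F|] /\
      [/\ #|region t1|%:R <= b * #|F|%:R,
          #|region t2|%:R <= b * #|F|%:R,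
          wf_tree alpha c b L t1 & wf_tree alpha c b L t2]
  end.

Definition sep_tree (alpha c b : R) (L : nat) (G : {set {set V}}) (t : stree) : Prop :=
  region t = G /\ wf_tree alpha c b L t.

(* Nodes are addressed by paths from the root: false = first child,
   true = second child. *)
Fixpoint subtree (t : stree) (p : seq bool) : option stree :=
  match p, t with
  | [::], _ => Some t
  | j :: p', SNode _ _ t1 t2 => subtree (if j then t2 else t1) p'
  | _ :: _, SLeaf _ => None
  end.

Definition is_node (t : stree) (p : seq bool) : bool :=
  if subtree t p is Some _ then true else false.

Fixpoint bnd_from (t : stree) (bd : {set V}) (p : seq bool) : {set V} :=
  match p, t with
  | [::], _ => bd
  | j :: p', SNode _ Sp t1 t2 =>
      let t' := if j then t2 else t1 in
      bnd_from t' ((bd :|: Sp) :&: verts (region t')) p'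
  | _ :: _, SLeaf _ => set0
  end.

Definition bnd (t : stree) (p : seq bool) : {set V} := bnd_from t set0 p.

Definition sep_at (t : stree) (p : seq bool) : {set V} :=
  match subtree t p with Some t' => sepof t' | None => set0 end.

Definition prefixes (p : seq bool) : seq (seq bool) :=
  [seq take i p | i <- iota 0 (size p).+1].

Definition path_closure (Hs : seq (seq bool)) : seq (seq bool) :=
  undup (flatten [seq prefixes p | p <- Hs]).

End Defs.

(* Main.v *)
Require Import Defs.
From HB Require Import structures.
From mathcomp Require Import all_boot all_order all_algebra.
From mathcomp Require Import reals.
From mathcomp Require Import exp.
From mathcomp Require Import zify ring lra.
Import Order.TTheory GRing.Theory Num.Theory.
Local Open Scope ring_scope.
Set Implicit Arguments. Unset Strict Implicit. Unset Printing Implicit Defensive.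

Definition tails (j : bool) (P : seq (seq bool)) : seq (seq bool) :=
  pmap (fun p => if p is j' :: q then (if j' == j then Some q else None) else None) P.

Lemma mem_tails j P q : (q \in tails j P) = (j :: q \in P).
Proof.
elim: P => [|p P IH] //=; case: p => [|j' q'] /=; first by rewrite in_cons IH.
case: (eqVneq j' j) => [->|ne] /=; first by rewrite !in_cons eqseq_cons eqxx IH.
by rewrite in_cons eqseq_cons eq_sym (negbTE ne) IH.
Qed.

Lemma uniq_tails j P : uniq P -> uniq (tails j P).
Proof.
elim: P => [|p P IH] //= /andP[pP uP]; case: p pP => [|j' q'] pP //=; auto.
case: (eqVneq j' j) => [eq|ne] /=; last by auto.
by move: pP; rewrite eq => pP /=; rewrite mem_tails pP IH.
Qed.

Lemma sum_split (F : seq bool -> nat) P :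
  (\sum_(p <- P) F p =
   \sum_(p <- P | nilp p) F p + \sum_(q <- tails false P) F (false :: q)
   + \sum_(q <- tails true P) F (true :: q))%N.
Proof.
elim: P => [|p P IH]; first by rewrite !big_nil.
rewrite !big_cons IH; case: p => [|[] q] /=; rewrite ?big_cons /=; lia.
Qed.

Lemma sum_nil_le (F : seq bool -> nat) P : uniq P ->
  (\sum_(p <- P | nilp p) F p <= F [::])%N.
Proof.
elim: P => [|p P IH]; first by rewrite big_nil.
move=> /= /andP[pP uP]; rewrite big_cons.
case: p pP => [|j q] pP /=; last exact: IH.
rewrite big1_seq ?addn0 //; move=> x /andP[xn xP]; move/nilP: xn => xn; subst x.
by rewrite xP in pP.
Qed.

Lemma subtree_nil V (t : stree V) : subtree t [::] = Some t.
Proof. by case: t. Qed.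

Lemma bnd_from_nil V (t : stree V) bd : bnd_from t bd [::] = bd.
Proof. by case: t. Qed.

Definition sz V (t : stree V) p : nat :=
  if subtree t p is Some t' then #|region t'| else 0%N.

Lemma level_sz (R : realType) (alpha c b : R) L V (i : nat) :
  forall (t : stree V) P, wf_tree alpha c b L t -> uniq P ->
  (\sum_(p <- P) (if size p == i then sz t p else 0) <= #|region t|)%N.
Proof.
elim: i => [|i IH] t P wf uP; rewrite sum_split.
- rewrite [X in (_ + X + _)%N]big1_seq ?[X in (_ + X)%N]big1_seq //.
  rewrite !addn0; apply: leq_trans (sum_nil_le _ uP) _.
  by rewrite /= /sz subtree_nil leqnn.
- rewrite [X in (X + _ + _)%N]big1; last by move=> p /nilP ->.
  case: t wf => [F|F Sp t1 t2] wf.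
    by rewrite !big1 // => p; case: ifP.
  case: wf => [[_ dis un _ _] [_ _ w1 w2]].
  rewrite add0n -un cardsU dis cards0 subn0.
  apply: leq_add; [exact: (IH t1 _ w1 (uniq_tails _ uP)) | exact: (IH t2 _ w2 (uniq_tails _ uP))].
Qed.

Definition pclosed (P : seq (seq bool)) := forall p i, p \in P -> take i p \in P.

Lemma pclosed_tails j P : pclosed P -> pclosed (tails j P).
Proof.
move=> pc p i; rewrite !mem_tails => /(pc _ i.+1) /=; by [].
Qed.

Lemma card_children V (bd Sp : {set V}) (r1 r2 : {set {set V}}) :
  verts r1 :&: verts r2 = Sp ->
  (#|(bd :|: Sp) :&: verts r1| + #|(bd :|: Sp) :&: verts r2| <= #|bd| + 2 * #|Sp|)%N.
Proof.
move=> vS; rewrite -cardsUI.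
have h1 : (#|((bd :|: Sp) :&: verts r1) :|: ((bd :|: Sp) :&: verts r2)| <= #|bd :|: Sp|)%N.
  by apply: subset_leq_card; rewrite -setIUr subsetIl.
have h2 : (#|((bd :|: Sp) :&: verts r1) :&: ((bd :|: Sp) :&: verts r2)| <= #|Sp|)%N.
  apply: subset_leq_card; rewrite -vS; apply/subsetP => x.
  by rewrite !inE => /andP[/andP[_ ->] /andP[_ ->]].
have h3 : (#|bd :|: Sp| <= #|bd| + #|Sp|)%N by rewrite cardsU leq_subr.
lia.
Qed.

Lemma level_bnd (R : realType) (alpha c b : R) L V (i : nat) :
  forall (t : stree V) bd P, wf_tree alpha c b L t -> uniq P -> pclosed P ->
  (\sum_(p <- P) (if size p == i then #|bnd_from t bd p| else 0) <=
   #|bd| + 2 * \sum_(j < i) \sum_(p <- P) (if size p == j then #|sep_at t p| else 0))%N.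
Proof.
elim: i => [|i IH] t bd P wf uP pc.
- rewrite sum_split [X in (_ + X + _)%N]big1_seq ?[X in (_ + X)%N]big1_seq //.
  rewrite !addn0; apply: leq_trans (sum_nil_le _ uP) _.
  by rewrite /= bnd_from_nil leq_addr.
case: (boolP ([::] \in P)) => nP; last first.
  case: P uP pc nP => [|p P] uP pc nP; first by rewrite big_nil.
  by move: (pc p 0%N (mem_head _ _)); rewrite take0 (negbTE nP).
rewrite sum_split [X in (X + _ + _)%N]big1; last by move=> p /nilP ->.
case: t wf => [F|F Sp t1 t2] wf.
  have z : forall j, (\sum_(q <- tails j P)
     (if size (j :: q) == i.+1 then #|bnd_from (SLeaf F) bd (j :: q)| else 0) = 0)%N.
    by move=> j; rewrite big1 // => q _; case: ifP => _ //=; rewrite cards0.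
  by rewrite z z.
case: wf => [[_ dis un vS _] [_ _ w1 w2]].
have IH1 := IH t1 ((bd :|: Sp) :&: verts (region t1)) _ w1 (uniq_tails false uP)
  (@pclosed_tails false _ pc).
have IH2 := IH t2 ((bd :|: Sp) :&: verts (region t2)) _ w2 (uniq_tails true uP)
  (@pclosed_tails true _ pc).
have hc := card_children bd vS.
have E : forall j : nat,
  (\sum_(p <- P) (if size p == j.+1 then #|sep_at (SNode F Sp t1 t2) p| else 0) =
   \sum_(q <- tails false P) (if size q == j then #|sep_at t1 q| else 0) +
   \sum_(q <- tails true P) (if size q == j then #|sep_at t2 q| else 0))%N.
  move=> j; rewrite (sum_split _ P) [X in (X + _ + _)%N]big1; last by move=> p /nilP ->.
  by [].
have Z0 : (#|Sp| <= \sum_(p <- P) (if size p == 0%N then #|sep_at (SNode F Sp t1 t2) p| else 0))%N.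
  by rewrite (big_rem [::]) //= leq_addr.
rewrite big_ord_recl.
rewrite (eq_bigr (fun j : 'I_i => \sum_(q <- tails false P) (if size q == j then #|sep_at t1 q| else 0) +
   \sum_(q <- tails true P) (if size q == j then #|sep_at t2 q| else 0)))%N; last first.
  by move=> j _; rewrite -E.
rewrite big_split /=.
have E2 : forall j (t' : stree V) bd',
  (\sum_(q <- tails j P) (if (size q).+1 == i.+1 then #|bnd_from t' bd' q| else 0) =
   \sum_(q <- tails j P) (if size q == i then #|bnd_from t' bd' q| else 0))%N by [].
rewrite !E2.
move: IH1 IH2.
set Y1 := (\sum_(j < i) _)%N.
set Y2 := (\sum_(j < i) _)%N.
set A1 := (\sum_(p <- tails false P) _)%N.
set A2 := (\sum_(p <- tails true P) _)%N.
move=> IH1 IH2.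
rewrite -/Y1 -/Y2 -/A1 -/A2.
move: Z0 hc.
set z := (\sum_(p <- P) _)%N.
set c1 := #|(bd :|: Sp) :&: verts (region t1)|.
set c2 := #|(bd :|: Sp) :&: verts (region t2)|.
move=> Z0 hc.
rewrite -/z -/c1 -/c2.
move: IH1 IH2; rewrite -/c1 -/c2.
lia.
Qed.

Lemma young_pt (R : realType) (a x t : R) : 0 < a < 1 -> 0 <= x -> 0 < t ->
  x `^ a * t `^ (1 - a) <= a * x + (1 - a) * t.
Proof.
move=> /andP[a0 a1] x0 t0.
have a'0 : 0 < 1 - a by rewrite subr_gt0.
have := @conjugate_powR R (x `^ a) (t `^ (1 - a)) a^-1 (1 - a)^-1
  (powR_ge0 _ _) (powR_ge0 _ _).
rewrite !invr_gt0 a0 a'0 !invrK => /(_ isT isT).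
rewrite addrC subrK => /(_ erefl).
rewrite -!powRrM !mulfV ?gt_eqF // !powRr1 ?(ltW t0) //.
by rewrite [a * x]mulrC [(1 - a) * t]mulrC.
Qed.

Lemma sum_cst (R : realType) (T : Type) (s : seq T) (c : R) :
  \sum_(x <- s) c = c * (size s)%:R.
Proof.
elim: s => [|x s IH]; first by rewrite big_nil mulr0.
by rewrite big_cons IH /= mulrS; ring.
Qed.

Lemma power_mean (R : realType) (a : R) (T : eqType) (s : seq T) (f : T -> R) :
  0 < a < 1 -> (forall x, 0 <= f x) ->
  \sum_(x <- s) (f x `^ a) <= (size s)%:R `^ (1 - a) * (\sum_(x <- s) f x) `^ a.
Proof.
move=> /[dup] aa /andP[a0 a1] f0.
have a'0 : 0 < 1 - a by rewrite subr_gt0.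
set S := \sum_(x <- s) f x.
have S0 : 0 <= S by apply: sumr_ge0.
case: (eqVneq S 0) => [SE|SN].
  rewrite SE powR0 ?gt_eqF // mulr0 big_seq big1 // => x xs.
  have : f x <= S by rewrite /S (big_rem x) //= lerDl sumr_ge0.
  rewrite SE => fx; have -> : f x = 0 by apply/eqP; rewrite eq_le fx f0.
  by rewrite powR0 ?gt_eqF.
have Sp : 0 < S by rewrite lt_def SN S0.
have kp : (0 < size s)%N.
  by case: s @S SN {S0 Sp} => //= ; rewrite big_nil eqxx.
have kR : 0 < (size s)%:R :> R by rewrite ltr0n.
set t := S / (size s)%:R.
have t0 : 0 < t by rewrite divr_gt0.
have tp : 0 < t `^ (1 - a) by rewrite powR_gt0.
rewrite -(ler_pM2r tp).
have -> : (size s)%:R `^ (1 - a) * S `^ a * t `^ (1 - a) = S.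
  rewrite mulrAC -powRM ?(ltW kR) ?(ltW t0) //.
  rewrite [(size s)%:R * t]mulrC /t divfK ?gt_eqF // -powRD; last by rewrite SN implybT.
  by rewrite subrK powRr1.
rewrite mulr_suml.
apply: le_trans (ler_sum _ (fun x _ => young_pt aa (f0 x) t0)) _.
rewrite big_split /= -!mulr_sumr -/S sum_cst mulVf ?gt_eqF // mulr1.
rewrite (_ : a * S + (1 - a) * S = S) //; ring.
Qed.

Lemma take_minsz (p : seq bool) i : take i p = take (minn i (size p)) p.
Proof. by rewrite take_min take_size. Qed.

Lemma prefixesP p q : reflect (exists i, p = take i q) (p \in prefixes q).
Proof.
apply: (iffP mapP) => [[i _ ->]|[i ->]]; first by exists i.
exists (minn i (size q)); last exact: take_minsz.
by rewrite mem_iota add0n ltnS geq_minr.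
Qed.

Lemma closureP p Hs :
  reflect (exists2 q, q \in Hs & exists i, p = take i q) (p \in path_closure Hs).
Proof.
rewrite mem_undup; apply: (iffP flatten_mapP) => [[q qH /prefixesP pq]|[q qH pq]].
  by exists q.
by exists q => //; apply/prefixesP.
Qed.

Lemma pclosed_closure Hs : pclosed (path_closure Hs).
Proof.
move=> p k /closureP[q qH [i ->]]; apply/closureP; exists q => //.
by exists (minn k i); rewrite take_min.
Qed.

Lemma node_size V (q : seq bool) : forall t : stree V, is_node t q -> (size q <= height t)%N.
Proof.
elim: q => [|j q IH] [F|F Sp t1 t2] //= H.
have := IH _ H; case: j {H} => /= h; apply: leq_trans h _;
  by rewrite ?leq_maxl ?leq_maxr.
Qed.

Lemma slice_size Hs j :
  (size [seq p <- path_closure Hs | size p == j] <= size Hs)%N.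
Proof.
rewrite -[X in (_ <= X)%N](size_map (take j)).
apply: uniq_leq_size; first by rewrite filter_uniq // undup_uniq.
move=> p; rewrite mem_filter => /andP[/eqP sp /closureP[q qH [i pe]]].
apply/mapP; exists q => //.
have : size (take i q) = j by rewrite -pe.
by rewrite size_take_min => h; rewrite pe (take_minsz q i) h.
Qed.

Lemma wf_subtree (R : realType) (alpha c b : R) L V (p : seq bool) :
  forall (t t' : stree V), wf_tree alpha c b L t -> subtree t p = Some t' ->
  wf_tree alpha c b L t'.
Proof.
elim: p => [|j p IH] t t' wf; first by rewrite subtree_nil => -[<-].
case: t wf => [F|F Sp t1 t2] //= [_ [_ _ w1 w2]].
by case: j; apply: IH.
Qed.

Lemma sep_node (R : realType) (alpha c b : R) L V (t : stree V) p :
  0 < alpha -> 0 < c -> wf_tree alpha c b L t ->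
  (#|sep_at t p|%:R : R) <= 2 * c * (sz t p)%:R `^ alpha.
Proof.
move=> a0 c0 wf; rewrite /sep_at /sz.
case E: (subtree t p) => [t'|]; last by rewrite cards0 mulr_ge0 ?powR_ge0 // mulr_ge0 // ltW.
have := wf_subtree wf E; case: t' {E} => [F|F Sp t1 t2] /=.
  by move=> _; rewrite cards0 mulr_ge0 ?powR_ge0 // mulr_ge0 // ltW.
move=> [[F2 _ _ _ hS] _]; apply: le_trans hS _; rewrite /sepbound.
set x := _ `^ alpha.
have x1 : 1 <= x.
  have h1 : 1 <= (#|F|%:R : R) by rewrite ler1n; apply: leq_trans F2.
  by have := ler_powR h1 (ltW a0); rewrite powRr0.
have := ceil_itv x => /andP[h _].
rewrite intrB in h.
have hc : (Num.ceil x)%:~R <= x + 1 :> R by lra.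
have := ler_wpM2l (ltW c0) hc; nra.
Qed.

Lemma g_bound (R : realType) (alpha c b : R) L V (T : stree V) Hs j :
  0 < alpha < 1 -> 0 < c -> wf_tree alpha c b L T ->
  ((\sum_(p <- path_closure Hs) (if size p == j then #|sep_at T p| else 0))%N%:R : R)
   <= 2 * c * ((size Hs)%:R `^ (1 - alpha) * (#|region T|%:R) `^ alpha).
Proof.
move=> /[dup] aa /andP[a0 a1] c0 wf.
set P := path_closure Hs.
have uP : uniq P by apply: undup_uniq.
rewrite -big_mkcond /= -big_filter natr_sum.
apply: le_trans (ler_sum _ (fun p _ => sep_node p a0 c0 wf)) _.
rewrite -mulr_sumr ler_wpM2l ?mulr_ge0 ?(ltW c0) //.
apply: le_trans (power_mean _ aa (fun p => ler0n _ (sz T p))) _.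
apply: ler_pM; rewrite ?powR_ge0 //.
  apply: ge0_ler_powR; rewrite ?nnegrE ?ler0n ?subr_ge0 ?(ltW a1) // ler_nat.
  exact: slice_size.
apply: ge0_ler_powR; rewrite ?nnegrE ?ler0n ?(ltW a0) //.
  by apply: sumr_ge0 => p _; apply: ler0n.
rewrite -natr_sum ler_nat big_filter big_mkcond /=.
exact: (level_sz j wf uP).
Qed.

Lemma sum_ord_eq (N n x : nat) : (n < N)%N ->
  (\sum_(i < N) (if n == i then x else 0) = x)%N.
Proof.
move=> h; rewrite -big_mkcond (big_pred1 (Ordinal h)) //.
Qed.

Unset Implicit Arguments.
Set Strict Implicit.

Theorem mainTheorem6 (R : realType) (alpha c b Ceta : R) (L : nat) :
  0 < alpha < 1 -> 0 < c -> 0 < b < 1 -> 0 < Ceta ->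
  exists (C : R) (k : nat), 0 < C /\
  forall (V : finType) (G : {set {set V}}) (T : stree V) (Hs : seq (seq bool)),
    simple_graph G ->
    separable alpha c b G ->
    sep_tree alpha c b L G T ->
    (height T)%:R <= Ceta * ln ((#|G|.+2)%:R : R) ->
    uniq Hs -> all (is_node T) Hs ->
    ((\sum_(p <- path_closure Hs) (#|bnd T p| + #|sep_at T p|))%N%:R : R)
      <= C * ((size Hs)%:R `^ (1 - alpha)) * ((#|G|%:R : R) `^ alpha)
           * (ln ((#|G|.+2)%:R : R)) ^+ k.
Proof.
move=> aa c0 _ Ce0.
have l2 : 0 < ln (2 : R) by apply: ln_gt0; lra.
set D := Ceta + (ln (2 : R))^-1.
have D0 : 0 < D by rewrite /D addr_gt0 // invr_gt0.
exists (6 * c * D ^+ 2), 2%N; split; first by rewrite !mulr_gt0 // exprn_gt0.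
move=> V G T Hs _ _ [regT wf] hh uH allH.
set P := path_closure Hs.
set N := (height T).+1.
have uP : uniq P by apply: undup_uniq.
have pcP : pclosed P by apply: pclosed_closure.
have szP : forall p, p \in P -> (size p < N)%N.
  move=> p /closureP[q qH [i ->]]; rewrite ltnS.
  apply: leq_trans (node_size (allP allH q qH)).
  by rewrite size_take_min geq_minr.
set g := fun i : nat => (\sum_(p <- P) (if size p == i then #|sep_at T p| else 0))%N.
set h := fun i : nat => (\sum_(p <- P) (if size p == i then #|bnd T p| else 0))%N.
have E1 : (\sum_(p <- P) (#|bnd T p| + #|sep_at T p|) = \sum_(i < N) (h i + g i))%N.
  rewrite big_seq (eq_bigr (fun p => \sum_(i < N) (if size p == i then #|bnd T p| + #|sep_at T p| else 0))%N); last first.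
    by move=> p pP; rewrite sum_ord_eq // szP.
  rewrite -big_seq exchange_big; apply: eq_bigr => i _.
  rewrite /h /g -big_split; apply: eq_bigr => p _; by case: ifP.
set B := 2 * c * ((size Hs)%:R `^ (1 - alpha) * (#|G|%:R : R) `^ alpha).
have B0 : 0 <= B by rewrite !mulr_ge0 ?powR_ge0 // ltW.
have gB : forall i, (g i)%:R <= B.
  by move=> i; rewrite /B -regT; exact: (@g_bound R alpha c b L V T Hs i aa c0 wf).
have hB : forall i : 'I_N, (h i)%:R <= 2 * N%:R * B.
  move=> i; have := level_bnd i set0 wf uP pcP; rewrite cards0 add0n => hi.
  apply: le_trans (_ : ((2 * \sum_(j < i) g j)%N%:R : R) <= _).
    by rewrite ler_nat.
  rewrite natrM natr_sum.
  apply: le_trans (_ : 2%:R * \sum_(j < i) B <= _).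
    by rewrite ler_wpM2l // ler_sum // => j _; apply: gB.
  rewrite sumr_const card_ord -[B *+ _]mulr_natr -[2 * N%:R * B]mulrA ler_wpM2l //.
  by rewrite [B * _]mulrC ler_wpM2r // ler_nat ltnW.
rewrite E1 natr_sum.
apply: le_trans (_ : \sum_(i < N) (2 * N%:R * B + B) <= _).
  by apply: ler_sum => i _; rewrite natrD lerD.
rewrite sumr_const card_ord -[_ *+ N]mulr_natr.
set l := ln _.
have l2l : ln (2 : R) <= l.
  by rewrite /l ler_ln ?posrE ?ltr0n // ler_nat.
have l0 : 0 < l by apply: lt_le_trans l2l.
have N1 : 1 <= N%:R :> R by rewrite ler1n.
have ND : N%:R <= D * l.
  rewrite /N -addn1 natrD /D mulrDl.
  apply: lerD; first exact: hh.
  by rewrite ler_pdivlMl // mulr1.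
have QQ : (2 * N%:R * B + B) * N%:R <= 3 * (D * l) ^+ 2 * B.
  have : N%:R * (2 * N%:R + 1) <= 3 * (D * l) ^+ 2 :> R by nra.
  move=> H; rewrite (_ : (2 * N%:R * B + B) * N%:R = N%:R * (2 * N%:R + 1) * B); last by ring.
  by rewrite ler_wpM2r.
apply: le_trans QQ _; rewrite /B le_eqVlt; apply/orP; left; apply/eqP; ring.
Qed.
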